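(* Let $k,\ell$ be non-negative integers with $\ell<2k$. Let $D$ be an orientation of a $(k,\ell)$-sparse loopless multigraph $H=(V,F)$ in which every vertex has indegree at most $k$, and let $u,v\in V$ be distinct with $\varrho_D(u)+\varrho_D(v)=2k-\ell$. Let $S=\{w\in V\setminus\{u,v\}:\varrho_D(w)<k\}$, and let $T$ be the set of vertices of $V$ not reachable by a directed path in $D$ from any vertex of $S$. Then there exists a $(k,\ell)$-component of $H$ containing both $u$ and $v$ if and only if $u,v\in T$; and if such a component exists, it is exactly $T$.
   Context: For $X\subseteq V$, $i_H(X)$ is the number of edges of $H$ with both endpoints in $X$. $H$ is $(k,\ell)$-sparse if $i_H(X)\le\max\{k|X|-\ell,0\}$ for every $X\subseteq V$. A $(k,\ell)$-block of $H$ is a set $X\subseteq V$ with $i_H(X)=\max\{k|X|-\ell,0\}$; a $(k,\ell)$-component is an inclusion-wise maximal $(k,\ell)$-block. $\varrho_D(w)$ is the indegree of $w$ in $D$; every vertex of $S$ is considered reachable from $S$. *)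

(* Defs.v *)
From mathcomp Require Import all_boot.
Set Implicit Arguments. Unset Strict Implicit. Unset Printing Implicit Defensive.

(* A directed multigraph D on vertex set V with edge set E: edge e goes from
   tl e to hd e.  The underlying undirected multigraph is H; D is an
   orientation of H. *)
Section Graph.
Variables (V E : finType) (tl hd : E -> V).

Definition loopless : Prop := forall e : E, tl e != hd e.

Definition ind (X : {set V}) : nat := #|[set e : E | (tl e \in X) && (hd e \in X)]|.

Definition indeg (w : V) : nat := #|[set e : E | hd e == w]|.

(* truncated nat subtraction: k*|X| - l = max{k|X| - l, 0} *)
Definition sparse (k l : nat) : Prop :=
  forall X : {set V}, ind X <= k * #|X| - l.

Definition block (k l : nat) (X : {set V}) : Prop := ind X = k * #|X| - l.

Definition component (k l : nat) (X : {set V}) : Prop :=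
  block k l X /\ forall Y : {set V}, block k l Y -> X \subset Y -> Y = X.

Definition arc : rel V := fun x y => [exists e : E, (tl e == x) && (hd e == y)].

(* vertices reachable by a directed path from some vertex of S
   (connect is reflexive, so every vertex of S is reachable) *)
Definition reachable_from (S : {set V}) (w : V) : bool :=
  [exists s in S, connect arc s w].
End Graph.

(* Main.v *)
Require Import Defs.
From mathcomp Require Import all_boot.
From mathcomp Require Import zify.
Set Implicit Arguments.

Section Helpers.
Variables (V E : finType) (tl hd : E -> V) (k l : nat) (u v : V).
Hypotheses (hl : l < 2 * k) (hdeg : forall w : V, indeg hd w <= k) (huv : u != v)
  (hsum : indeg hd u + indeg hd v = 2 * k - l).

Lemma cardA (X : {set V}) : #|[set e | hd e \in X]| = \sum_(w in X) indeg hd w.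
Proof.
rewrite -sum1_card (partition_big hd (fun w => w \in X)) /=; last first.
  by move=> e; rewrite inE.
apply: eq_bigr => w wX; rewrite /indeg -sum1_card; apply: eq_bigl => e.
rewrite !inE; case: (hd e =P w) => [->|]; by rewrite ?wX ?andbF.
Qed.

Lemma split_sum (X : {set V}) (f : V -> nat) : u \in X -> v \in X ->
  \sum_(w in X) f w = f u + f v + \sum_(w in X :\ u :\ v) f w.
Proof.
move=> uX vX; rewrite (bigD1 u uX) /=.
have vX' : (v \in X) && (v != u) by apply/andP; split => //; rewrite eq_sym.
rewrite (bigD1 v vX') /= -[RHS]addnA; congr (_ + (_ + _)).
apply: eq_bigl => w; rewrite !inE; apply/idP/idP.
  by move=> /andP[/andP[a b] c]; rewrite b c /=.
by move=> /and3P[a b c]; rewrite a b !andbT.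
Qed.

Lemma card_rest (X : {set V}) : u \in X -> v \in X -> #|X| = #|X :\ u :\ v| + 2.
Proof.
move=> uX vX; have h1 := cardsD1 u X; have h2 := cardsD1 v (X :\ u).
rewrite uX /= in h1; rewrite in_setD1 eq_sym huv vX /= in h2; lia.
Qed.

Lemma block_props (X : {set V}) : u \in X -> v \in X -> block tl hd k l X ->
  (forall w, w \in X :\ u :\ v -> indeg hd w = k) /\
  (forall e, hd e \in X -> tl e \in X).
Proof.
move=> uX vX bX.
set A := [set e | hd e \in X]. set I := [set e | (tl e \in X) && (hd e \in X)].
have IA : I \subset A by apply/subsetP => e; rewrite !inE => /andP[].
have cA := cardA X. rewrite (split_sum (indeg hd) uX vX) in cA.
have hle := @leqif_sum V (fun w => w \in X :\ u :\ v) (fun w => indeg hd w == k)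
  (fun w => indeg hd w) (fun _ => k) (fun w _ => leqif_eq (hdeg w)).
have hs : \sum_(w in X :\ u :\ v) k = #|X :\ u :\ v| * k by rewrite sum_nat_const.
have hc := card_rest uX vX.
have hI := subset_leqif_cards IA.
have bI : #|I| = k * #|X| - l by [].
have h1 := hle.1. have h2 := hI.1.
rewrite hs in h1.
have e1 : \sum_(w in X :\ u :\ v) indeg hd w = \sum_(w in X :\ u :\ v) k.
  rewrite hs; rewrite hc in bI; rewrite -/A in cA; nia.
have e2 : #|I| = #|A|.
  rewrite hc in bI; rewrite -/A in cA; nia.
split.
  move=> w wr; have := hle.2; rewrite e1 eqxx => /esym /forallP /(_ w).
  by rewrite wr => /eqP.
move=> e he; have := hI.2; rewrite e2 eqxx => /esym /eqP IAe.
have : e \in A by rewrite inE.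
by rewrite -IAe inE => /andP[].
Qed.

Lemma closed_not_reach (X S : {set V}) :
  (forall e, hd e \in X -> tl e \in X) -> (forall w, w \in X -> w \notin S) ->
  forall w, w \in X -> ~~ reachable_from tl hd S w.
Proof.
move=> hc hS w wX; apply/existsP => [[s /andP[sS /connectP[p pth wl]]]].
have : s \in X.
  elim: p s pth wl {sS} => [|y p IH] s /=; first by move=> _ <-.
  move=> /andP[/existsP[e /andP[/eqP te /eqP he]] pth] hlast.
  have yX := IH y pth hlast. rewrite -te; apply: hc; by rewrite he.
by move=> /hS; rewrite sS.
Qed.

Lemma closed_card (T : {set V}) : (forall e, hd e \in T -> tl e \in T) ->
  #|[set e | (tl e \in T) && (hd e \in T)]| = #|[set e | hd e \in T]|.
Proof.
move=> Tc; apply: eq_card => e; rewrite !inE; case hT: (hd e \in T); last by rewrite andbF.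
by rewrite andbT Tc.
Qed.

End Helpers.

Theorem lemma4 (k l : nat) (V E : finType) (tl hd : E -> V) (u v : V) :
  l < 2 * k ->
  loopless tl hd ->
  sparse tl hd k l ->
  (forall w : V, indeg hd w <= k) ->
  u != v ->
  indeg hd u + indeg hd v = 2 * k - l ->
  let Sset := [set w : V | (w != u) && (w != v) && (indeg hd w < k)] in
  let Tset := [set w : V | ~~ reachable_from tl hd Sset w] in
  ((exists C : {set V}, component tl hd k l C /\ u \in C /\ v \in C)
     <-> (u \in Tset /\ v \in Tset)) /\
  (forall C : {set V}, component tl hd k l C -> u \in C -> v \in C -> C = Tset).
Proof.
move=> hl _ _ hdeg huv hsum Sset Tset.
have key : forall X : {set V}, u \in X -> v \in X -> block tl hd k l X -> X \subset Tset.
  move=> X uX vX bX.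
  have [hk hc] := block_props hl hdeg huv hsum uX vX bX.
  apply/subsetP => w wX; rewrite inE; apply: (@closed_not_reach V E tl hd X Sset hc _ w wX) => x xX.
  rewrite inE; apply/negP => /andP[/andP[xu xv]].
  by rewrite hk ?ltnn // !inE xu xv.
have Tclosed : forall e, hd e \in Tset -> tl e \in Tset.
  move=> e; apply: contraLR; rewrite !inE !negbK => /existsP[s /andP[sS c]].
  apply/existsP; exists s; rewrite sS (connect_trans c) // connect1 //.
  by apply/existsP; exists e; rewrite !eqxx.
have Tblock : u \in Tset -> v \in Tset -> block tl hd k l Tset.
  move=> uT vT; rewrite /block /ind.
  rewrite closed_card //.
  rewrite cardA (split_sum huv (indeg hd) uT vT) hsum.
  have -> : \sum_(w in Tset :\ u :\ v) indeg hd w = \sum_(w in Tset :\ u :\ v) k.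
    apply: eq_bigr => w; rewrite !inE => /andP[wv /andP[wu wT]].
    apply/eqP; rewrite eqn_leq hdeg /=; rewrite leqNgt; apply/negP => lt.
    move/negP: wT; apply; apply/existsP; exists w; rewrite connect0 andbT inE.
    by rewrite wu wv lt.
  rewrite sum_nat_const (card_rest E hd k l hl huv hsum uT vT); nia.
split; first split.
- case=> C [[bC _] [uC vC]]; have /subsetP sub := key C uC vC bC.
  by split; apply: sub.
- case=> uT vT; exists Tset; split; last by [].
  split; first exact: Tblock.
  move=> Y bY /subsetP TY; have uY := TY u uT; have vY := TY v vT.
  apply/eqP; rewrite eqEsubset key //; by apply/subsetP.
- move=> C [bC maxC] uC vC; have CT := key C uC vC bC.
  have /subsetP s := CT.
  by symmetry; apply: maxC => //; apply: Tblock; apply: s.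
Qed.
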